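(* For every real $\alpha$ with $0<\alpha<1/2$ there exists a positive constant $c_\alpha$ such that for every positive integer $N$ there exists a set $\mathcal{M}$ of positive integers of cardinality $N$ with \[ \sum_{m,n\in\mathcal{M}}\frac{(m,n)^{2\alpha}}{(mn)^{\alpha}}\ge c_\alpha N^{2-2\alpha}(\log N)^{2\alpha}. \]
   Context: $(m,n)$ denotes the greatest common divisor of $m$ and $n$. *)

(* Defs.v *)
From Stdlib Require Import Reals Arith List.
Open Scope R_scope.

Definition gcd_term (a : R) (m n : nat) : R :=
  Rpower (INR (Nat.gcd m n)) (2 * a) / Rpower (INR (m * n)) a.

(* \sum_{m,n in M} over ordered pairs (diagonal included); M given as a
   duplicate-free list. *)
Definition gcd_sum (a : R) (M : list nat) : R :=
  fold_right Rplus 0 (map (fun m => fold_right Rplus 0 (map (fun n => gcd_term a m n) M)) M).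

(* Real power x^y for x >= 0 with the convention 0^y = 0 (y > 0 here);
   Stdlib's Rpower would give Rpower 0 y = 1. *)
Definition rpow (x y : R) : R := if Rle_dec x 0 then 0 else Rpower x y.

(* Main.v *)
Require Import Defs.
From Stdlib Require Import Reals Arith List Lia Lra.
Open Scope nat_scope.

Definition pairs (W : nat) : list (nat * nat) :=
  flat_map (fun b => map (fun a => (a, b)) (seq 1 (W / b))) (seq 1 W).

Lemma in_pairs W a b : In (a, b) (pairs W) <-> (1 <= a /\ 1 <= b /\ a * b <= W)%nat.
Proof.
  unfold pairs. rewrite in_flat_map. split.
  - intros [b' [Hb' Hin]]. apply in_map_iff in Hin. destruct Hin as [a' [E Ha']].
    inversion E; subst. apply in_seq in Hb'. apply in_seq in Ha'.
    assert (a <= W / b)%nat by lia.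
    assert (a * b <= W)%nat.
    { pose proof (Nat.Div0.mul_div_le W b). nia. }
    lia.
  - intros [Ha [Hb Hab]]. exists b. split.
    + apply in_seq. nia.
    + apply in_map_iff. exists a. split; auto. apply in_seq.
      assert (a <= W / b)%nat. { apply Nat.div_le_lower_bound; lia. } lia.
Qed.

Lemma NoDup_pairs W : NoDup (pairs W).
Proof.
  unfold pairs. generalize (seq_NoDup W 1). generalize (seq 1 W).
  induction l as [|b l IH]; intros H; simpl. constructor.
  inversion H; subst. apply NoDup_app.
  - apply NoDup_map_NoDup_ForallPairs. intros x y _ _ E. congruence. apply seq_NoDup.
  - apply IH; auto.
  - intros [x y] K1 K2. apply in_map_iff in K1. destruct K1 as [a' [E _]]. inversion E; subst.
    apply in_flat_map in K2. destruct K2 as [b' [Hb' Hin]].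
    apply in_map_iff in Hin. destruct Hin as [? [E2 _]]. inversion E2; subst. contradiction.
Qed.

Lemma length_pairs W : length (pairs W) = list_sum (map (fun b => W / b) (seq 1 W)).
Proof.
  unfold pairs. rewrite length_flat_map. f_equal. apply map_ext. intros. rewrite length_map, length_seq. auto.
Qed.

Definition cop (W : nat) := filter (fun p => Nat.eqb (Nat.gcd (fst p) (snd p)) 1) (pairs W).
Definition noncop (W : nat) := filter (fun p => negb (Nat.eqb (Nat.gcd (fst p) (snd p)) 1)) (pairs W).

Lemma filter_split {A} (f : A -> bool) l :
  length (filter f l) + length (filter (fun x => negb (f x)) l) = length l.
Proof. induction l; simpl; auto. destruct (f a); simpl; lia. Qed.

Definition bigL (Z : nat) : list (nat * (nat * nat)) :=
  flat_map (fun g => map (fun q => (g, q)) (pairs (Z / (g * g)))) (seq 2 (Z - 1)).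

Definition hmap (p : nat * nat) : nat * (nat * nat) :=
  let g := Nat.gcd (fst p) (snd p) in (g, (fst p / g, snd p / g)).

Lemma noncop_le Z : (length (noncop Z) <= length (bigL Z))%nat.
Proof.
  rewrite <- (length_map hmap).
  apply NoDup_incl_length.
  - apply NoDup_map_NoDup_ForallPairs.
    + intros [a b] [a' b'] H1 H2 E. unfold noncop in *.
      apply filter_In in H1. apply filter_In in H2.
      destruct H1 as [H1 _]; destruct H2 as [H2 _].
      apply in_pairs in H1; apply in_pairs in H2.
      unfold hmap in E; simpl in E. inversion E as [[Eg Ea Eb]].
      assert (Nat.gcd a b <> 0)%nat. { intro Z0. apply Nat.gcd_eq_0 in Z0. lia. }
      destruct (Nat.gcd_divide a b) as [[ka Hka] [kb Hkb]].
      destruct (Nat.gcd_divide a' b') as [[ka' Hka'] [kb' Hkb']].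
      set (g := Nat.gcd a b) in *. set (g' := Nat.gcd a' b') in *.
      clearbody g g'. subst g'.
      subst a b a' b'. rewrite !Nat.div_mul in Ea, Eb by auto. subst. auto.
    + apply NoDup_filter. apply NoDup_pairs.
  - intros x Hx. apply in_map_iff in Hx. destruct Hx as [[a b] [E H]].
    unfold noncop in H. apply filter_In in H. destruct H as [H Hg].
    apply in_pairs in H. subst x. unfold hmap, bigL. simpl in *.
    set (g := Nat.gcd a b) in *.
    assert (gn1 : g <> 1%nat). { intro. apply Nat.eqb_eq in H0. rewrite H0 in Hg. discriminate. }
    assert (g <> 0)%nat. { intro Z0. apply Nat.gcd_eq_0 in Z0. lia. }
    destruct (Nat.gcd_divide a b) as [[ka Hka] [kb Hkb]]. fold g in Hka, Hkb.
    assert (g <= a)%nat. { rewrite Hka. destruct ka; nia. }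
    apply in_flat_map. exists g. split.
    + apply in_seq. nia.
    + apply in_map_iff. exists (a / g, b / g). split; auto.
      apply in_pairs. rewrite Hka, Hkb. rewrite !Nat.div_mul by auto.
      split; [|split]; try nia.
      apply Nat.div_le_lower_bound. nia. nia.
Qed.
Open Scope R_scope.

Fixpoint harm (n : nat) : R := match n with O => 0 | S k => harm k + / INR (S k) end.

Definition Rsum (l : list R) := fold_right Rplus 0 l.

Lemma INR_list_sum l : INR (list_sum l) = Rsum (map INR l).
Proof. induction l; simpl; auto. rewrite plus_INR, IHl. auto. Qed.

Lemma Rsum_le {A} (f g : A -> R) l : (forall x, In x l -> f x <= g x) ->
  Rsum (map f l) <= Rsum (map g l).
Proof. induction l; simpl; intros H. lra. pose proof (H a (or_introl eq_refl)).
  assert (Rsum (map f l) <= Rsum (map g l)) by (apply IHl; auto). lra. Qed.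

Lemma Rsum_scal {A} (c : R) (f : A -> R) l : Rsum (map (fun x => c * f x) l) = c * Rsum (map f l).
Proof. induction l; simpl. ring. rewrite IHl. ring. Qed.

Lemma Rsum_minus {A} (f g : A -> R) l : Rsum (map (fun x => f x - g x) l) = Rsum (map f l) - Rsum (map g l).
Proof. induction l; simpl. ring. rewrite IHl. ring. Qed.

Lemma Rsum_harm n : Rsum (map (fun b => / INR b) (seq 1 n)) = harm n.
Proof. induction n. simpl; auto. rewrite seq_S, map_app. simpl harm. rewrite <- IHn.
  unfold Rsum. rewrite fold_right_app. simpl.
  replace (1 + n)%nat with (S n) by lia.
  generalize (map (fun b => / INR b) (seq 1 n)). induction l; simpl. ring. rewrite IHl. ring. Qed.

Lemma Rsum_const_len {A} (c : R) (l : list A) : Rsum (map (fun _ => c) l) = INR (length l) * c.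
Proof. induction l; simpl. ring. rewrite IHl. destruct (length l); simpl; ring. Qed.

Lemma INR_div_le a b : (0 < b)%nat -> INR (a / b) <= INR a / INR b.
Proof. intros Hb. assert (INR b > 0) by (apply lt_0_INR; lia).
  apply Rmult_le_reg_r with (INR b); auto. unfold Rdiv. rewrite Rmult_assoc, Rinv_l by lra.
  rewrite Rmult_1_r, <- mult_INR. apply le_INR. rewrite Nat.mul_comm. apply Nat.Div0.mul_div_le. Qed.

Lemma INR_div_ge a b : (0 < b)%nat -> INR a / INR b - 1 <= INR (a / b).
Proof. intros Hb. assert (INR b > 0) by (apply lt_0_INR; lia).
  pose proof (Nat.div_mod a b ltac:(lia)). pose proof (Nat.mod_upper_bound a b ltac:(lia)).
  assert (INR a = INR b * INR (a/b) + INR (a mod b)). { rewrite <- mult_INR, <- plus_INR. f_equal. auto. }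
  assert (INR (a mod b) + 1 <= INR b). { rewrite <- S_INR. apply le_INR. lia. }
  rewrite H2. unfold Rdiv. rewrite Rmult_plus_distr_r.
  replace (INR b * INR (a / b) * / INR b) with (INR (a/b)) by (field; lra).
  assert (INR (a mod b) * / INR b <= 1).
  { apply Rmult_le_reg_r with (INR b); auto. rewrite Rmult_assoc, Rinv_l by lra. lra. }
  lra. Qed.

Lemma pairs_upper W : INR (length (pairs W)) <= INR W * harm W.
Proof.
  rewrite length_pairs, INR_list_sum, map_map, <- Rsum_harm, <- Rsum_scal.
  apply Rsum_le. intros b Hb. apply in_seq in Hb.
  apply Rle_trans with (INR W / INR b). apply INR_div_le; lia. unfold Rdiv; lra.
Qed.

Lemma pairs_lower W : INR W * harm W - INR W <= INR (length (pairs W)).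
Proof.
  rewrite length_pairs, INR_list_sum, map_map, <- Rsum_harm, <- Rsum_scal.
  assert (E : INR W = Rsum (map (fun _ => 1) (seq 1 W)))
    by (rewrite Rsum_const_len, length_seq; ring).
  set (S1 := Rsum (map (fun x => INR W * / INR x) (seq 1 W))).
  rewrite E. unfold S1. rewrite <- Rsum_minus.
  apply Rsum_le. intros b Hb. apply in_seq in Hb.
  pose proof (INR_div_ge W b ltac:(lia)). unfold Rdiv in H; lra.
Qed.

Lemma harm_nonneg n : 0 <= harm n.
Proof. induction n; cbn [harm]. lra. assert (0 < / INR (S n)) by (apply Rinv_0_lt_compat, lt_0_INR; lia). lra. Qed.

Lemma harm_mono m n : (m <= n)%nat -> harm m <= harm n.
Proof. induction 1. lra. cbn [harm]. assert (0 < / INR (S m0)) by (apply Rinv_0_lt_compat, lt_0_INR; lia). lra. Qed.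

Lemma ln_le x y : 0 < x -> x <= y -> ln x <= ln y.
Proof. intros. destruct (Rle_lt_or_eq_dec _ _ H0). left; apply ln_increasing; auto. subst; lra. Qed.

Lemma harm_ln n : ln (INR n + 1) <= harm n.
Proof.
  induction n. simpl. rewrite Rplus_0_l, ln_1. lra.
  cbn [harm]. rewrite S_INR.
  assert (P : 0 < INR n + 1) by (pose proof (pos_INR n); lra).
  assert (ln (INR n + 1 + 1) - ln (INR n + 1) <= / (INR n + 1)).
  { pose proof (Rinv_0_lt_compat _ P).
    replace (INR n + 1 + 1) with ((INR n + 1) * (1 + / (INR n + 1))) by (field; lra).
    rewrite ln_mult by lra.
    cut (ln (1 + / (INR n + 1)) <= / (INR n + 1)). lra.
    rewrite <- (ln_exp (/ (INR n + 1))) at 2. apply ln_le.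
    lra. apply exp_ineq1_le. }
  lra.
Qed.

Lemma inv_sq_sum n : (2 <= n)%nat ->
  Rsum (map (fun g => / (INR g * INR g)) (seq 2 (n - 1))) <= 3/4 - / INR n.
Proof.
  induction n as [|n IH]; intros Hn. lia.
  destruct (Nat.eq_dec n 1). subst. simpl. unfold Rsum; simpl. lra.
  replace (S n - 1)%nat with (S (n - 1)) by lia. rewrite seq_S, map_app.
  unfold Rsum in *. rewrite fold_right_app. cbn [fold_right map].
  replace (2 + (n - 1))%nat with (S n) by lia.
  assert (Hf : forall l c, fold_right Rplus c l = fold_right Rplus 0 l + c).
  { induction l; simpl; intros. ring. rewrite IHl. ring. }
  rewrite Hf. specialize (IH ltac:(lia)).
  assert (1 < INR n) by (apply lt_1_INR; lia). rewrite S_INR.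
  assert (/ ((INR n + 1) * (INR n + 1)) + 0 <= / INR n - / (INR n + 1)).
  { rewrite Rplus_0_r. apply Rmult_le_reg_r with (INR n * (INR n + 1) * (INR n + 1)). nra.
    field_simplify; try lra. }
  lra.
Qed.

Lemma bigL_upper Z : INR (length (bigL Z)) <= 3/4 * (INR Z * harm Z).
Proof.
  unfold bigL. rewrite length_flat_map, INR_list_sum, map_map.
  pose proof (harm_nonneg Z). pose proof (pos_INR Z).
  apply Rle_trans with (Rsum (map (fun g => (INR Z * harm Z) * / (INR g * INR g)) (seq 2 (Z - 1)))).
  - apply Rsum_le. intros g Hg. apply in_seq in Hg. rewrite length_map.
    assert (Hg0 : 0 < INR g) by (apply lt_0_INR; lia).
    eapply Rle_trans. apply pairs_upper.
    pose proof (pos_INR (Z / (g * g))).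
    apply Rle_trans with (INR (Z / (g * g)) * harm Z).
    apply Rmult_le_compat_l; auto. apply harm_mono. apply (Nat.le_trans _ (Z / 1)). apply Nat.div_le_compat_l; nia. rewrite Nat.div_1_r; lia.
    pose proof (INR_div_le Z (g * g) ltac:(nia)). rewrite mult_INR in H2.
    replace (INR Z * harm Z * / (INR g * INR g)) with (INR Z / (INR g * INR g) * harm Z) by (field; lra).
    apply Rmult_le_compat_r; auto.
  - rewrite Rsum_scal. destruct (le_lt_dec 2 Z).
    + pose proof (inv_sq_sum Z l). assert (0 < / INR Z) by (apply Rinv_0_lt_compat, lt_0_INR; lia).
      assert (0 <= INR Z * harm Z) by nra. nra.
    + replace (Z - 1)%nat with 0%nat by lia. simpl. unfold Rsum; simpl. nra.
Qed.

Lemma cop_lower Z : INR Z * ln (INR Z + 1) / 4 - INR Z <= INR (length (cop Z)).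
Proof.
  pose proof (filter_split (fun p => Nat.eqb (Nat.gcd (fst p) (snd p)) 1) (pairs Z)).
  fold (cop Z) in H. fold (noncop Z) in H.
  pose proof (noncop_le Z). pose proof (bigL_upper Z). pose proof (pairs_lower Z).
  pose proof (harm_ln Z). pose proof (pos_INR Z).
  assert (INR (length (cop Z)) + INR (length (noncop Z)) = INR (length (pairs Z))).
  { rewrite <- plus_INR. f_equal. auto. }
  apply le_INR in H0.
  assert (INR Z * ln (INR Z + 1) <= INR Z * harm Z) by (apply Rmult_le_compat_l; auto).
  lra.
Qed.

Lemma fact_div b Z : (1 <= b <= Z)%nat -> Nat.divide b (fact Z).
Proof.
  induction Z; intros H. lia.
  destruct (Nat.eq_dec b (S Z)). subst. simpl fact. exists (fact Z). lia.
  simpl fact. apply Nat.divide_add_r. apply IHZ; lia. apply Nat.divide_mul_r. apply IHZ; lia.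
Qed.

Definition FF (Z : nat) := (fact Z * fact Z)%nat.
Definition fmap (Z : nat) (p : nat * nat) : nat := (fst p * (FF Z / snd p))%nat.

Lemma FF_split Z b b' : (1 <= b <= Z)%nat -> (1 <= b' <= Z)%nat ->
  Nat.divide (b * b') (FF Z) /\ (FF Z / b = b' * (FF Z / (b * b')))%nat /\ (1 <= FF Z / (b * b'))%nat.
Proof.
  intros Hb Hb'. destruct (fact_div b Z Hb) as [u Hu]. destruct (fact_div b' Z Hb') as [v Hv].
  pose proof (lt_O_fact Z).
  assert (E : (FF Z = (u * v) * (b * b'))%nat).
  { unfold FF. rewrite Hu at 1. rewrite Hv. ring. }
  rewrite E. rewrite Nat.div_mul by nia.
  replace ((u * v) * (b * b'))%nat with ((b' * (u * v)) * b)%nat by ring.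
  rewrite Nat.div_mul by nia.
  split. exists (u * v)%nat. lia. split. auto.
  assert (u <> 0)%nat. { intro. subst. simpl in Hu. lia. }
  assert (v <> 0)%nat. { intro. subst. simpl in Hv. lia. }
  nia.
Qed.

Lemma fmap_inj Z p q : In p (cop Z) -> In q (cop Z) -> fmap Z p = fmap Z q -> p = q.
Proof.
  destruct p as [a b], q as [a' b']. unfold cop. rewrite !filter_In, !in_pairs. simpl.
  intros [[Ha [Hb Hab]] Hg] [[Ha' [Hb' Hab']] Hg'] E. unfold fmap in E; simpl in E.
  apply Nat.eqb_eq in Hg, Hg'.
  destruct (FF_split Z b b' ltac:(nia) ltac:(nia)) as [_ [E1 P1]].
  destruct (FF_split Z b' b ltac:(nia) ltac:(nia)) as [_ [E2 _]].
  rewrite E1, E2, (Nat.mul_comm b' b) in E.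
  assert (E3 : (a * b' = a' * b)%nat) by nia.
  assert (Nat.divide a a'). { apply (Nat.gauss a b a'). exists b'. lia. auto. }
  assert (Nat.divide a' a). { apply (Nat.gauss a' b' a). exists b. lia. auto. }
  assert (a = a') by (apply Nat.divide_antisym; auto). subst.
  f_equal. nia.
Qed.

Lemma fmap_pos Z p : In p (cop Z) -> (1 <= fmap Z p)%nat.
Proof.
  destruct p as [a b]. unfold cop. rewrite filter_In, in_pairs. simpl. intros [[Ha [Hb Hab]] _].
  destruct (FF_split Z b b ltac:(nia) ltac:(nia)) as [_ [E1 P1]]. unfold fmap. simpl. rewrite E1. nia.
Qed.

Lemma Rpower_pos x y : 0 < Rpower x y.
Proof. unfold Rpower. apply exp_pos. Qed.

Lemma fmap_term Z alpha p q : 0 < alpha -> In p (cop Z) -> In q (cop Z) ->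
  / Rpower (INR Z * INR Z) alpha <= gcd_term alpha (fmap Z p) (fmap Z q).
Proof.
  intros Hal. destruct p as [a b], q as [a' b']. unfold cop. rewrite !filter_In, !in_pairs. simpl.
  intros [[Ha [Hb Hab]] _] [[Ha' [Hb' Hab']] _].
  destruct (FF_split Z b b' ltac:(nia) ltac:(nia)) as [_ [E1 P1]].
  destruct (FF_split Z b' b ltac:(nia) ltac:(nia)) as [_ [E2 _]].
  rewrite (Nat.mul_comm b' b) in E2.
  set (g := (FF Z / (b * b'))%nat) in *.
  unfold fmap; simpl. rewrite E1, E2.
  set (m := (a * (b' * g))%nat). set (n := (a' * (b * g))%nat).
  assert (Hgd : (g <= Nat.gcd m n)%nat).
  { apply Nat.divide_pos_le.
    destruct (Nat.gcd m n) eqn:E. apply Nat.gcd_eq_0 in E. unfold m in E. nia. lia.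
    apply Nat.gcd_greatest. exists (a * b')%nat. unfold m. ring. exists (a' * b)%nat. unfold n. ring. }
  unfold gcd_term.
  assert (Hg : 0 < INR g) by (apply lt_0_INR; lia).
  assert (HP : 0 < INR (a * b' * (a' * b))) by (apply lt_0_INR; nia).
  assert (Emn : INR (m * n) = INR (a * b' * (a' * b)) * (INR g * INR g)).
  { rewrite <- !mult_INR. f_equal. unfold m, n. ring. }
  rewrite Emn. rewrite <- (Rpower_mult_distr (INR (a * b' * (a' * b))) (INR g * INR g)) by nra.
  rewrite <- (Rpower_mult_distr (INR g) (INR g)) by lra.
  assert (Rpower (INR g) (2 * alpha) <= Rpower (INR (Nat.gcd m n)) (2 * alpha)).
  { apply Rle_Rpower_l. lra. split; auto. apply le_INR; auto. }
  replace (2 * alpha) with (alpha + alpha) in H by ring. rewrite Rpower_plus in H.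
  pose proof (Rpower_pos (INR g) alpha).
  pose proof (Rpower_pos (INR (a * b' * (a' * b))) alpha).
  assert (Rpower (INR (a * b' * (a' * b))) alpha <= Rpower (INR Z * INR Z) alpha).
  { apply Rle_Rpower_l. lra. split; auto. rewrite <- mult_INR. apply le_INR. nia. }
  pose proof (Rpower_pos (INR Z * INR Z) alpha).
  apply Rle_trans with (/ Rpower (INR (a * b' * (a' * b))) alpha).
  apply Rinv_le_contravar; auto.
  unfold Rdiv. apply Rmult_le_reg_r with (Rpower (INR (a * b' * (a' * b))) alpha * (Rpower (INR g) alpha * Rpower (INR g) alpha)).
  apply Rmult_lt_0_compat; auto; apply Rmult_lt_0_compat; auto.
  set (P := Rpower (INR (a * b' * (a' * b))) alpha) in *.
  set (G := Rpower (INR g) alpha) in *.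
  replace (/ P * (P * (G * G))) with (G * G) by (field; lra).
  replace (Rpower (INR (Nat.gcd m n)) (2 * alpha) * / (P * (G * G)) * (P * (G * G)))
    with (Rpower (INR (Nat.gcd m n)) (2 * alpha)) by (field; split; nra).
  replace (2 * alpha) with (alpha + alpha) by ring. auto.
Qed.

Lemma cop_ge_N N : (N <= length (cop N))%nat.
Proof.
  apply Nat.le_trans with (length (map (fun a => (a, 1%nat)) (seq 1 N))).
  rewrite length_map, length_seq; lia.
  apply NoDup_incl_length.
  apply NoDup_map_NoDup_ForallPairs. intros x y _ _ E; congruence. apply seq_NoDup.
  intros [a b] H. apply in_map_iff in H. destruct H as [x [E Hx]]. inversion E; subst.
  apply in_seq in Hx. unfold cop. apply filter_In. split. apply in_pairs. lia.
  simpl. apply Nat.eqb_eq. apply Nat.bezout_1_gcd. exists 1%nat, (a - 1)%nat. lia.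
Qed.

Lemma harm_le n : harm n <= INR n.
Proof. induction n. simpl; lra. cbn [harm].
  assert (/ INR (S n) <= 1). { rewrite <- Rinv_1. apply Rinv_le_contravar. lra. rewrite S_INR. pose proof (pos_INR n). lra. }
  rewrite S_INR at 2. lra. Qed.

Lemma cop_le_sq Z : INR (length (cop Z)) <= INR Z * INR Z.
Proof.
  apply Rle_trans with (INR (length (pairs Z))).
  apply le_INR. unfold cop. rewrite <- (filter_split (fun p => Nat.eqb (Nat.gcd (fst p) (snd p)) 1) (pairs Z)). lia.
  eapply Rle_trans. apply pairs_upper. apply Rmult_le_compat_l. apply pos_INR. apply harm_le.
Qed.

Lemma least_Z N k : (N <= length (cop k))%nat ->
  exists Z, (Z <= k)%nat /\ (N <= length (cop Z))%nat /\ (Z = 0 \/ length (cop (Z - 1)) < N)%nat.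
Proof.
  induction k; intros H. exists 0%nat. lia.
  destruct (le_lt_dec N (length (cop k))).
  - destruct (IHk l) as [Z HZ]. exists Z. lia.
  - exists (S k). replace (S k - 1)%nat with k by lia. lia.
Qed.

Lemma cop0 : length (cop 0) = 0%nat. Proof. reflexivity. Qed.
Lemma cop1 : length (cop 1) = 1%nat. Proof. reflexivity. Qed.

Lemma gcd_term_pos a m n : 0 <= gcd_term a m n.
Proof. unfold gcd_term, Rdiv. pose proof (Rpower_pos (INR (Nat.gcd m n)) (2 * a)).
  pose proof (Rpower_pos (INR (m * n)) a). pose proof (Rinv_0_lt_compat _ H0). nra. Qed.

Lemma sum_lower {A} (f : A -> R) c l : (forall x, In x l -> c <= f x) ->
  INR (length l) * c <= fold_right Rplus 0 (map f l).
Proof. induction l; cbn [length map fold_right]; intros H. simpl; lra. rewrite S_INR.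
  pose proof (H a (or_introl eq_refl)). assert (INR (length l) * c <= fold_right Rplus 0 (map f l)) by (apply IHl; intros; apply H; right; auto). lra. Qed.

Lemma gcd_sum_lower a c M : (forall m n, In m M -> In n M -> c <= gcd_term a m n) ->
  INR (length M) * (INR (length M) * c) <= gcd_sum a M.
Proof.
  intros H. unfold gcd_sum. apply sum_lower. intros m Hm. apply sum_lower. intros n Hn. auto.
Qed.

Lemma gcd_sum_nonneg a M : 0 <= gcd_sum a M.
Proof.
  pose proof (gcd_sum_lower a 0 M (fun m n _ _ => gcd_term_pos a m n)). lra.
Qed.

Lemma NoDup_firstn {A} n (l : list A) : NoDup l -> NoDup (firstn n l).
Proof. intros H. rewrite <- (firstn_skipn n l) in H. eapply NoDup_app_remove_r; eauto. Qed.

Lemma key_bound N : (2 <= N)%nat -> exists Z, (2 <= Z)%nat /\ (N <= length (cop Z))%nat /\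
  INR Z * ln (INR N) <= 32 * INR N.
Proof.
  intros HN. destruct (least_Z N N (cop_ge_N N)) as [Z [HZN [HC HM]]].
  assert (2 <= Z)%nat.
  { destruct Z as [|[|Z]]. rewrite cop0 in HC; lia. rewrite cop1 in HC; lia. lia. }
  exists Z. split; auto. split; auto.
  destruct HM as [|HM]. lia.
  pose proof (cop_lower (Z - 1)). apply lt_INR in HM.
  rewrite minus_INR in H0 by lia. change (INR 1) with 1 in H0.
  replace (INR Z - 1 + 1) with (INR Z) in H0 by ring.
  pose proof (cop_le_sq Z). apply le_INR in HC.
  assert (z2 : 2 <= INR Z) by (apply (le_INR 2); lia).
  assert (n2 : 2 <= INR N) by (apply (le_INR 2); lia).
  apply le_INR in HZN.
  assert (ln (INR N) <= 2 * ln (INR Z)).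
  { replace (2 * ln (INR Z)) with (ln (INR Z * INR Z)) by (rewrite ln_mult; lra).
    apply ln_le; lra. }
  assert (0 <= ln (INR Z)). { rewrite <- ln_1. apply ln_le; lra. }
  assert ((INR Z - 1) * ln (INR Z) < 8 * INR N) by lra.
  assert (INR Z * ln (INR Z) <= 2 * ((INR Z - 1) * ln (INR Z))) by nra.
  nra.
Qed.

Theorem theorem8 :
  forall alpha : R, 0 < alpha < 1 / 2 ->
  exists c : R, 0 < c /\
    forall N : nat, (1 <= N)%nat ->
      exists M : list nat,
        NoDup M /\ length M = N /\ (forall m, In m M -> (1 <= m)%nat) /\
        gcd_sum alpha M >=
          c * Rpower (INR N) (2 - 2 * alpha) * rpow (ln (INR N)) (2 * alpha).
Proof.
  intros alpha [Ha0 Ha1].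
  exists (/ Rpower 32 (2 * alpha)). split. apply Rinv_0_lt_compat, Rpower_pos.
  intros N HN. destruct (Nat.eq_dec N 1).
  - subst. exists (1%nat :: nil). split. repeat constructor. auto.
    split. auto. split. intros m [<-|[]]. lia.
    unfold rpow. simpl INR. rewrite ln_1. destruct (Rle_dec 0 0); [|lra].
    pose proof (gcd_sum_nonneg alpha (1%nat :: nil)). lra.
  - destruct (key_bound N ltac:(lia)) as [Z [HZ [HC HK]]].
    set (L := map (fmap Z) (cop Z)).
    assert (HL : (N <= length L)%nat) by (unfold L; rewrite length_map; auto).
    set (M := firstn N L).
    assert (HMin : forall m, In m M -> exists p, In p (cop Z) /\ m = fmap Z p).
    { intros m Hm. assert (In m L).
      { unfold M in Hm. rewrite <- (firstn_skipn N L). apply in_or_app. auto. }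
      unfold L in H. apply in_map_iff in H. destruct H as [p [E Hp]]. eauto. }
    exists M. split; [|split; [|split]].
    + unfold M. apply NoDup_firstn. unfold L. apply NoDup_map_NoDup_ForallPairs.
      intros p q Hp Hq. apply fmap_inj; auto. apply NoDup_filter, NoDup_pairs.
    + unfold M. apply firstn_length_le. auto.
    + intros m Hm. destruct (HMin m Hm) as [p [Hp ->]]. apply fmap_pos; auto.
    + assert (HlenM : length M = N) by (unfold M; apply firstn_length_le; auto).
      pose proof (gcd_sum_lower alpha (/ Rpower (INR Z * INR Z) alpha) M) as GS.
      rewrite HlenM in GS.
      assert (GS' : INR N * (INR N * / Rpower (INR Z * INR Z) alpha) <= gcd_sum alpha M).
      { apply GS. intros m n0 Hm Hn. destruct (HMin m Hm) as [p [Hp ->]].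
        destruct (HMin n0 Hn) as [q [Hq ->]]. apply fmap_term; auto. }
      clear GS. apply Rle_ge. eapply Rle_trans; [|exact GS'].
      assert (n2 : 2 <= INR N) by (apply (le_INR 2); lia).
      assert (z2 : 2 <= INR Z) by (apply (le_INR 2); lia).
      assert (lnpos : 0 < ln (INR N)). { rewrite <- ln_1. apply ln_increasing; lra. }
      unfold rpow. destruct (Rle_dec (ln (INR N)) 0). lra.
      set (nn := INR N) in *. set (zz := INR Z) in *.
      assert (EA : Rpower (zz * zz) alpha = Rpower zz (2 * alpha)).
      { rewrite <- Rpower_mult_distr by lra. rewrite <- Rpower_plus. f_equal. ring. }
      rewrite EA.
      assert (Hmono : Rpower (zz * ln nn) (2 * alpha) <= Rpower (32 * nn) (2 * alpha)).
      { apply Rle_Rpower_l. lra. split. nra. auto. }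
      rewrite <- !Rpower_mult_distr in Hmono by nra.
      assert (En : nn * nn = Rpower nn (2 - 2 * alpha) * Rpower nn (2 * alpha)).
      { rewrite <- Rpower_plus. replace (2 - 2 * alpha + 2 * alpha) with (INR 2) by (simpl; ring).
        rewrite Rpower_pow by lra. simpl. ring. }
      set (A := Rpower zz (2 * alpha)) in *. set (Lg := Rpower (ln nn) (2 * alpha)) in *.
      set (Q := Rpower 32 (2 * alpha)) in *. set (P := Rpower nn (2 * alpha)) in *.
      set (P2 := Rpower nn (2 - 2 * alpha)) in *.
      assert (0 < A) by apply Rpower_pos. assert (0 < Lg) by apply Rpower_pos.
      assert (0 < Q) by apply Rpower_pos. assert (0 < P) by apply Rpower_pos.
      assert (0 < P2) by apply Rpower_pos.
      replace (nn * (nn * / A)) with (nn * nn / A) by (field; lra). rewrite En.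
      apply Rmult_le_reg_r with (A * Q). nra.
      replace (/ Q * P2 * Lg * (A * Q)) with (P2 * (A * Lg)) by (field; lra).
      replace (P2 * P / A * (A * Q)) with (P2 * (Q * P)) by (field; lra).
      apply Rmult_le_compat_l; lra.
Qed.
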